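(* Let $A$ be a finite set and let $\rho\subseteq A^n$, $n\ge3$, be an essential key relation preserved by a near-unanimity operation. Then the pattern of $\rho$ is the trivial equivalence relation on $\{1,\dots,n\}$.
   Context: A near-unanimity operation is an $m$-ary operation $f$ on $A$ ($m\ge 3$) with $f(y,x,\dots,x)=f(x,y,x,\dots,x)=\dots=f(x,\dots,x,y)=x$ for all $x,y$; it preserves $\rho$ if applying it coordinatewise to any $m$ tuples of $\rho$ gives a tuple of $\rho$. A unary vector-function is a tuple $\Psi=(\psi_1,\dots,\psi_n)$ of maps $\psi_i:A\to A$ acting coordinatewise; it preserves $\rho$ if $\Psi(\rho)\subseteq\rho$. $\rho$ is a key relation if there is $\beta\in A^n\setminus\rho$ (a key tuple) such that every $\alpha\in A^n\setminus\rho$ is mapped to $\beta$ by some unary vector-function preserving $\rho$. $\rho$ is essential if it cannot be written as a conjunction of relations of smaller arities. The pattern of $\rho$: for $i\ne j$, $i\overset{\rho}{\sim}j$ iff there do NOT exist $a_1,\dots,a_n,b_i,b_j\in A$ with $(a_1,\dots,a_n)\notin\rho$ while the tuples obtained by replacing $a_i$ by $b_i$, replacing $a_j$ by $b_j$, and replacing both, all lie in $\rho$; and $i\overset{\rho}{\sim}i$ always. *)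

(* Defs.v *)
From mathcomp Require Import all_boot.
Set Implicit Arguments. Unset Strict Implicit. Unset Printing Implicit Defensive.

(* An n-ary relation on A: a predicate on n-tuples, tuples being maps 'I_n -> A
   (coordinates indexed 0..n-1 instead of 1..n). *)
Definition relation (A : finType) (n : nat) := ('I_n -> A) -> Prop.

Definition near_unanimity (A : finType) (m : nat) (f : ('I_m -> A) -> A) : Prop :=
  3 <= m /\
  forall (x y : A) (i : 'I_m), f (fun j => if j == i then y else x) = x.

Definition preserves_op (A : finType) (n m : nat) (f : ('I_m -> A) -> A)
    (rho : relation A n) : Prop :=
  forall ts : 'I_m -> ('I_n -> A),
    (forall j, rho (ts j)) -> rho (fun i => f (fun j => ts j i)).

Definition apply_vf (A : finType) (n : nat) (Psi : 'I_n -> A -> A) (x : 'I_n -> A)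
  : 'I_n -> A := fun i => Psi i (x i).

Definition preserves_vf (A : finType) (n : nat) (Psi : 'I_n -> A -> A)
    (rho : relation A n) : Prop :=
  forall x, rho x -> rho (apply_vf Psi x).

Definition key_tuple (A : finType) (n : nat) (rho : relation A n) (beta : 'I_n -> A) : Prop :=
  ~ rho beta /\
  forall alpha, ~ rho alpha ->
    exists Psi : 'I_n -> A -> A, preserves_vf Psi rho /\ apply_vf Psi alpha = beta.

Definition key_relation (A : finType) (n : nat) (rho : relation A n) : Prop :=
  exists beta, key_tuple rho beta.

(* rho is a conjunction of finitely many relations sigma_j of arities m_j < n,
   each applied to some choice of the variables x_1..x_n (repetitions allowed). *)
Definition conj_smaller_arity (A : finType) (n : nat) (rho : relation A n) : Prop :=
  exists (k : nat) (m : 'I_k -> nat),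
    (forall j, m j < n) /\
    exists (sigma : forall j : 'I_k, ('I_(m j) -> A) -> Prop)
           (idx : forall j : 'I_k, 'I_(m j) -> 'I_n),
      forall x : 'I_n -> A,
        rho x <-> (forall j : 'I_k, sigma j (fun t => x (idx j t))).

Definition essential (A : finType) (n : nat) (rho : relation A n) : Prop :=
  ~ conj_smaller_arity rho.

Definition upd (A : finType) (n : nat) (a : 'I_n -> A) (i : 'I_n) (b : A) : 'I_n -> A :=
  fun k => if k == i then b else a k.

Definition pattern (A : finType) (n : nat) (rho : relation A n) (i j : 'I_n) : Prop :=
  i = j \/
  (i <> j /\
   ~ exists (a : 'I_n -> A) (bi bj : A),
       ~ rho a /\ rho (upd a i bi) /\ rho (upd a j bj) /\
       rho (upd (upd a i bi) j bj)).

(* Main.v *)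
Require Import Defs.
From mathcomp Require Import all_boot.
From mathcomp Require Import zify.
From Stdlib Require Import FunctionalExtensionality Classical.

Set Implicit Arguments. Unset Strict Implicit. Unset Printing Implicit Defensive.

Lemma nu_idem (A : finType) m (f : ('I_m -> A) -> A) :
  near_unanimity f -> forall x, f (fun _ => x) = x.
Proof.
case=> Hm H x.
have hm : 0 < m by lia.
rewrite -{2}(H x x (Ordinal hm)); congr f.
by apply: functional_extensionality => l; case: (_ == _).
Qed.

Lemma ess_tuple (A : finType) n (rho : relation A n.+1) :
  essential rho -> exists b, ~ rho b /\ forall p, exists c, rho (upd b p c).
Proof.
move=> Hess; apply: NNPP => Hno; apply: Hess.
exists n.+1, (fun _ => n); split; first by [].
exists (fun p y => exists x, rho x /\ forall t, x (lift p t) = y t), (fun p t => lift p t).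
move=> x; split.
  by move=> Hx p; exists x; split.
move=> H; apply: NNPP => Hnx; apply: Hno.
exists x; split=> // p.
case: (H p) => x' [Hx' Ex'].
exists (x' p).
suff -> : upd x p (x' p) = x' by [].
apply: functional_extensionality => q; rewrite /upd.
case: (unliftP p q) => [t ->|->]; last by rewrite eqxx.
have /negbTE := neq_lift p t; rewrite eq_sym => -> .
by rewrite Ex'.
Qed.

Ltac solveT i j k Tq ik jk ij ji ki kj :=
  let q := fresh "q" in
  let h1 := fresh "h" in let h2 := fresh "h" in let h3 := fresh "h" in
  apply: functional_extensionality; intro q; rewrite /upd ?Tq;
  destruct (eqVneq q k) as [->|h1]; [rewrite ?eqxx ?ki ?kj //|apply negbTE in h1; rewrite ?h1];
  destruct (eqVneq q j) as [->|h2]; [rewrite ?eqxx ?ji ?jk //|apply negbTE in h2; rewrite ?h2];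
  destruct (eqVneq q i) as [->|h3]; [rewrite ?eqxx ?ij ?ik //|apply negbTE in h3; rewrite ?h3 //].

Theorem mainTheorem7 (A : finType) (n : nat) (rho : relation A n) :
  3 <= n ->
  essential rho ->
  key_relation rho ->
  (exists (m : nat) (f : ('I_m -> A) -> A), near_unanimity f /\ preserves_op f rho) ->
  forall i j : 'I_n, pattern rho i j -> i = j.
Proof.
case: n rho => [|n] rho; first by [].
move=> Hn Hess _ [m [f [Hnu Hf]]] i j [//|[nij Hpat]].
exfalso.
have [b [nb Hb]] := ess_tuple Hess.
have [k [nki nkj]] : exists k : 'I_n.+1, k != i /\ k != j.
  pose kn := if (val i != 0) && (val j != 0) then 0
             else if (val i != 1) && (val j != 1) then 1 else 2.
  have kn_lt : kn < n.+1 by rewrite /kn; case: ifP => _; [|case: ifP => _]; lia.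
  exists (Ordinal kn_lt); rewrite -!val_eqE /= /kn.
  have nij' : val i != val j by apply/negP => /eqP /val_inj.
  case: ifP => [/andP[h1 h2]|h]; first by rewrite eq_sym h1 eq_sym h2.
  case: ifP => [/andP[h1 h2]|h']; first by rewrite eq_sym h1 eq_sym h2.
  move: h h' nij' (ltn_ord i) (ltn_ord j).
  rewrite /= => h h2 h3 _ _; move: h h2 h3; case: (nat_of_ord i) => [|[|[|?]]]; case: (nat_of_ord j) => [|[|[|?]]]; done.
have ik : (i == k) = false by rewrite eq_sym (negbTE nki).
have jk : (j == k) = false by rewrite eq_sym (negbTE nkj).
have ij : (i == j) = false by apply/eqP.
have ji : (j == i) = false by rewrite eq_sym ij.
have ki : (k == i) = false by apply: negbTE.
have kj : (k == j) = false by apply: negbTE.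
case: (Hb i) => ci Hci; case: (Hb j) => cj Hcj; case: (Hb k) => ck Hck.
pose T w u v := upd (upd (upd b i u) j v) k w.
have Tq : forall w u v q, T w u v q =
   if q == k then w else if q == j then v else if q == i then u else b q by [].
have rect : forall w u u' v v', rho (T w u v) -> rho (T w u' v) ->
    rho (T w u v') -> rho (T w u' v').
  move=> w u u' v v' H1 H2 H3; apply: NNPP => H4; apply: Hpat.
  exists (T w u' v'), u, v; split=> //.
  rewrite (_ : upd (T w u' v') i u = T w u v'); last by solveT i j k Tq ik jk ij ji ki kj.
  rewrite (_ : upd (T w u' v') j v = T w u' v); last by solveT i j k Tq ik jk ij ji ki kj.
  rewrite (_ : upd (T w u v') j v = T w u v); last by solveT i j k Tq ik jk ij ji ki kj.
  by [].
have Ej : T (b k) (b i) cj = upd b j cj by solveT i j k Tq ik jk ij ji ki kj.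
have Ei : T (b k) ci (b j) = upd b i ci by solveT i j k Tq ik jk ij ji ki kj.
have Ek : T ck (b i) (b j) = upd b k ck by solveT i j k Tq ik jk ij ji ki kj.
have E0 : T (b k) (b i) (b j) = b by solveT i j k Tq ik jk ij ji ki kj.
pose U (l p : nat) := if p <= l then b i else ci.
pose V (l p : nat) := if p < l then cj else b j.
pose W (l p : nat) := if p == l then ck else b k.
have C1 : forall l p, rho (T (W l p) (U l p) (V l p)).
  move=> l p; rewrite /W /U /V; case: (ltngtP p l) => _.
  - by rewrite Ej.
  - by rewrite Ei.
  - by rewrite Ek.
have C2 : forall l p, rho (T (b k) (U l p.+1) (V l p)).
  move=> l p; rewrite /U /V; case: (ltnP p l) => _.
  - by rewrite Ej.
  - by rewrite Ei.
have idem := nu_idem Hnu.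
have Hf3 : forall (W' U' V' : 'I_m -> A), (forall l, rho (T (W' l) (U' l) (V' l))) ->
    rho (T (f W') (f U') (f V')).
  move=> W' U' V' H.
  have := Hf (fun l => T (W' l) (U' l) (V' l)) H.
  suff -> : (fun q => f (fun l => T (W' l) (U' l) (V' l) q)) = T (f W') (f U') (f V') by [].
  apply: functional_extensionality => q; rewrite Tq.
  rewrite /T /upd.
  case: (q == k) => //; case: (q == j) => //; case: (q == i) => //.
pose u' p := f (fun l : 'I_m => U l p).
pose v' p := f (fun l : 'I_m => V l p).
have C1' : forall p, p < m -> rho (T (b k) (u' p) (v' p)).
  move=> p hp.
  have := Hf3 (fun l => W l p) (fun l => U l p) (fun l => V l p) (fun l => C1 l p).
  rewrite (_ : f (fun l => W l p) = b k) //.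
  rewrite -[RHS](Hnu.2 (b k) ck (Ordinal hp)); congr f.
  apply: functional_extensionality => l; rewrite /W -val_eqE /= eq_sym //.
have C2' : forall p, rho (T (b k) (u' p.+1) (v' p)).
  move=> p.
  have := Hf3 (fun l => b k) (fun l => U l p.+1) (fun l => V l p) (fun l => C2 l p).
  by rewrite idem.
have u0 : u' 0 = b i.
  rewrite /u' -[RHS](idem (b i)); f_equal.
have hm : 0 < m by case: Hnu; lia.
have vl : v' m.-1 = b j.
  rewrite /v' -[RHS](idem (b j)); f_equal.
  apply: functional_extensionality => l; rewrite /V.
  have := ltn_ord l; case: (ltnP m.-1 l) => //; lia.
have Ind : forall p, p < m -> rho (T (b k) (b i) (v' p)).
  elim => [|p IH] hp; first by rewrite -u0; exact: C1'.
  apply: (rect _ (u' p.+1) _ (v' p)); first exact: C2'.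
    by apply: IH; lia.
  exact: C1'.
apply: nb; rewrite -E0 -vl; apply: Ind; lia.
Qed.
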